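(* For $\alpha>0$ and $\lambda>0$ let $\psi(\alpha,\lambda)=e^{-\alpha\lambda}\sum_{k=0}^{\infty}\left(\frac{\lambda^k}{k!}\right)^{\alpha}$. Then for every $0<\alpha<1$ the function $\lambda\mapsto\psi(\alpha,\lambda)$ is strictly increasing on $(0,+\infty)$, while for every $\alpha>1$ the function $\lambda\mapsto\psi(\alpha,\lambda)$ is strictly decreasing on $(0,+\infty)$. Consequently, for every $\alpha>0$, $\alpha\ne1$, the R\'enyi entropy $H_R^{\alpha}(\lambda)=\frac{1}{1-\alpha}\log\psi(\alpha,\lambda)$ of the Poisson distribution with parameter $\lambda$ is strictly increasing in $\lambda\in(0,+\infty)$.
   Context: $\psi(\alpha,\lambda)=\sum_{k\ge0}p_k(\lambda)^\alpha$ where $p_k(\lambda)=\frac{\lambda^k}{k!}e^{-\lambda}$ are the Poisson probabilities. The R\'enyi entropy of order $\alpha>0,\alpha\ne1$, of a discrete distribution $(p_i)$ is $\frac{1}{1-\alpha}\log\sum_i p_i^\alpha$. *)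

(* Defs.v *)
From Stdlib Require Import Reals.
From Coquelicot Require Import Coquelicot.
Open Scope R_scope.

Definition poisson_p (lambda : R) (k : nat) : R :=
  lambda ^ k / INR (Factorial.fact k) * exp (- lambda).

Definition psi (alpha lambda : R) : R :=
  exp (- alpha * lambda) *
  Series (fun k : nat => Rpower (lambda ^ k / INR (Factorial.fact k)) alpha).

Definition renyi_entropy (alpha : R) (p : nat -> R) : R :=
  / (1 - alpha) * ln (Series (fun i : nat => Rpower (p i) alpha)).

Definition poisson_renyi (alpha lambda : R) : R :=
  renyi_entropy alpha (poisson_p lambda).

Definition strictly_increasing_pos (f : R -> R) : Prop :=
  forall x y : R, 0 < x -> x < y -> f x < f y.

Definition strictly_decreasing_pos (f : R -> R) : Prop :=
  forall x y : R, 0 < x -> x < y -> f y < f x.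

(* Main.v *)
Require Import Defs.
From Stdlib Require Import Reals Lra Lia.
From Coquelicot Require Import Coquelicot.
Open Scope R_scope.

Lemma exp_conv (t a b : R) : 0 <= t <= 1 ->
  exp (t * a + (1 - t) * b) <= t * exp a + (1 - t) * exp b.
Proof.
  intros Ht. set (m := t * a + (1 - t) * b).
  assert (Em : 0 < exp m) by apply exp_pos.
  assert (H1 : exp m * (1 + (a - m)) <= exp a).
  { replace (exp a) with (exp m * exp (a - m)).
    2:{ rewrite <- exp_plus. f_equal. ring. }
    apply Rmult_le_compat_l; [lra| apply exp_ineq1_le]. }
  assert (H2 : exp m * (1 + (b - m)) <= exp b).
  { replace (exp b) with (exp m * exp (b - m)).
    2:{ rewrite <- exp_plus. f_equal. ring. }
    apply Rmult_le_compat_l; [lra| apply exp_ineq1_le]. }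
  assert (Hid : t * (exp m * (1 + (a - m))) + (1 - t) * (exp m * (1 + (b - m))) = exp m).
  { unfold m. ring. }
  assert (t * (exp m * (1 + (a - m))) <= t * exp a) by (apply Rmult_le_compat_l; lra).
  assert ((1-t) * (exp m * (1 + (b - m))) <= (1-t) * exp b) by (apply Rmult_le_compat_l; lra).
  lra.
Qed.

Lemma L1 (al y : R) : 0 < al < 1 -> exp ((1 - al) * y) <= al + (1 - al) * exp y.
Proof.
  intros H. pose proof (exp_conv (1 - al) y 0 ltac:(lra)).
  replace ((1 - al) * y + (1 - (1 - al)) * 0) with ((1 - al) * y) in H0 by ring.
  rewrite exp_0 in H0. lra.
Qed.

Lemma L2 (al y : R) : 1 < al -> al <= exp ((1 - al) * y) + (al - 1) * exp y.
Proof.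
  intros H.
  assert (0 < / al < 1).
  { split. apply Rinv_0_lt_compat; lra. rewrite <- Rinv_1. apply Rinv_lt_contravar; lra. }
  pose proof (exp_conv (/ al) ((1 - al) * y) y ltac:(lra)).
  replace (/ al * ((1 - al) * y) + (1 - / al) * y) with 0 in H1 by (field; lra).
  rewrite exp_0 in H1.
  apply Rmult_le_compat_l with (r := al) in H1; [|lra].
  replace (al * (/ al * exp ((1 - al) * y) + (1 - / al) * exp y)) with
    (exp ((1 - al) * y) + (al - 1) * exp y) in H1 by (field; lra). lra.
Qed.

Definition bb al l n := Rpower (l ^ n / INR (Factorial.fact n)) al.
Definition cc al n := exp (- al * ln (INR (Factorial.fact n))).
Definition xx al l := exp (al * ln l).

Lemma exp_INR_mult n z : exp (INR n * z) = exp z ^ n.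
Proof.
  induction n. simpl. rewrite Rmult_0_l. apply exp_0.
  rewrite S_INR, <- tech_pow_Rmult, <- IHn, <- exp_plus. f_equal. ring.
Qed.

Lemma fact_pos n : 0 < INR (Factorial.fact n).
Proof. apply INR_fact_lt_0. Qed.

Lemma bb_eq al l n : 0 < l -> bb al l n = cc al n * xx al l ^ n.
Proof.
  intros Hl. unfold bb, cc, xx, Rpower.
  rewrite <- exp_INR_mult, <- exp_plus. f_equal.
  unfold Rdiv. rewrite ln_mult, ln_pow, ln_Rinv; auto.
  ring. apply fact_pos. apply pow_lt; auto. apply Rinv_0_lt_compat, fact_pos.
Qed.

Lemma bb_pos al l n : 0 < bb al l n.
Proof. apply exp_pos. Qed.

Lemma bb_0 al l : bb al l 0 = 1.
Proof. unfold bb, Rpower. simpl. replace (1/1) with 1 by field. rewrite ln_1, Rmult_0_r. apply exp_0. Qed.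

Lemma bb_S al l n : 0 < l ->
  bb al l (S n) = bb al l n * exp (al * ln (l / INR (S n))).
Proof.
  intros Hl. unfold bb, Rpower. rewrite <- exp_plus. f_equal.
  rewrite <- Rmult_plus_distr_l. f_equal.
  rewrite <- ln_mult.
  - f_equal. rewrite fact_simpl, mult_INR. rewrite <- tech_pow_Rmult. field.
    split. assert (0 < INR (S n)) by (apply lt_0_INR; lia); lra. pose proof (fact_pos n); lra.
  - apply Rdiv_lt_0_compat. apply pow_lt; auto. apply fact_pos.
  - apply Rdiv_lt_0_compat; auto. apply lt_0_INR; lia.
Qed.

Lemma cc_ratio al n : cc al (S n) / cc al n = exp (- al * ln (INR (S n))).
Proof.
  unfold cc. unfold Rdiv. rewrite <- exp_Ropp, <- exp_plus. f_equal.
  rewrite fact_simpl, mult_INR, ln_mult. ring.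
  apply lt_0_INR; lia. apply fact_pos.
Qed.

Lemma exists_big (r : R) : exists N : nat, r < INR N.
Proof.
  destruct (archimed_cor1 (/ (Rmax 1 r))) as [N [HN HN0]].
  { apply Rinv_0_lt_compat. pose proof (Rmax_l 1 r); lra. }
  exists N. assert (0 < INR N) by (apply lt_0_INR; auto).
  assert (Rmax 1 r < INR N).
  { destruct (Rlt_le_dec (Rmax 1 r) (INR N)) as [h|h]; auto.
    apply Rinv_le_contravar in h; auto. lra. }
  pose proof (Rmax_r 1 r); lra.
Qed.

Lemma radius al : 0 < al -> CV_radius (cc al) = p_infty.
Proof.
  intros Hal. apply CV_radius_infinite_DAlembert.
  - intros n. unfold cc. pose proof (exp_pos (- al * ln (INR (Factorial.fact n)))). lra.
  - apply is_lim_seq_spec. intros eps.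
    destruct (exists_big (exp (- ln eps / al))) as [N HN].
    exists N. intros n Hn. rewrite cc_ratio, Rminus_0_r, Rabs_Rabsolu, Rabs_pos_eq; [| left; apply exp_pos].
    assert (HS : exp (- ln eps / al) < INR (S n)).
    { apply Rlt_le_trans with (INR N); auto. apply le_INR; lia. }
    apply ln_increasing in HS; [| apply exp_pos]. rewrite ln_exp in HS.
    rewrite <- (exp_ln eps) by (destruct eps; simpl; lra).
    apply exp_increasing.
    apply Rmult_lt_compat_l with (r := al) in HS; auto.
    replace (al * (- ln eps / al)) with (- ln eps) in HS by (field; lra). lra.
Qed.
Lemma ex_bb al l : 0 < al -> 0 < l -> ex_series (bb al l).
Proof.
  intros Hal Hl. apply ex_series_ext with (fun n => cc al n * xx al l ^ n).
  { intros n; symmetry; apply bb_eq; auto. }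
  apply ex_pseries_R. apply CV_radius_inside. rewrite radius; auto. exact I.
Qed.

Definition dbb al l n := INR (S n) * bb al l (S n).

Lemma dbb_eq al l n : 0 < l ->
  dbb al l n = xx al l * (PS_derive (cc al) n * xx al l ^ n).
Proof.
  intros Hl. unfold dbb, PS_derive. rewrite bb_eq by auto. simpl pow. ring.
Qed.

Lemma ex_dbb al l : 0 < al -> 0 < l -> ex_series (dbb al l).
Proof.
  intros Hal Hl.
  apply ex_series_ext with (fun n => scal (xx al l) (PS_derive (cc al) n * xx al l ^ n)).
  { intros n; symmetry; rewrite dbb_eq by auto. reflexivity. }
  apply (@ex_series_scal_l R_AbsRing R_NormedModule). apply ex_pseries_R. apply ex_pseries_derive.
  rewrite radius; auto. exact I.
Qed.

Lemma Series_nonneg (a : nat -> R) : (forall n, 0 <= a n) -> ex_series a -> 0 <= Series a.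
Proof.
  intros H He.
  assert (Series (fun _ => 0) = 0).
  { rewrite (Series_ext (fun _ => 0) (fun n => 0 * 0)) by (intros; ring).
    rewrite Series_scal_l. ring. }
  rewrite <- H0. apply Series_le; auto. intros; split; [lra| auto].
Qed.

Lemma term_lt al l n : 0 < al < 1 -> 0 < l ->
  l / al * bb al l n + l * (1 - / al) * bb al l (S n) <= dbb al l n.
Proof.
  intros Hal Hl. unfold dbb. rewrite bb_S by auto.
  set (y := ln (l / INR (S n))).
  assert (HSn : 0 < INR (S n)) by (apply lt_0_INR; lia).
  assert (Ey : exp y = l / INR (S n)) by (apply exp_ln, Rdiv_lt_0_compat; auto).
  assert (ES : INR (S n) = l / exp y) by (rewrite Ey; field; split; lra).
  assert (Ee : exp y = exp (al * y) * exp ((1 - al) * y)) by (rewrite <- exp_plus; f_equal; ring).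
  pose proof (L1 al y Hal). pose proof (bb_pos al l n) as Hb.
  pose proof (exp_pos (al * y)). pose proof (exp_pos ((1-al) * y)).
  rewrite ES, Ee.
  set (b := bb al l n). set (A := exp (al * y)). set (B := exp ((1-al)*y)).
  fold B in H. rewrite Ee in H. fold A B in H.
  assert (0 < A) by apply exp_pos. assert (0 < B) by apply exp_pos. assert (0 < b) by apply bb_pos.
  assert (Hd : l / (A * B) * (b * A) - (l / al * b + l * (1 - / al) * (b * A))
     = (l * b / (al * B)) * (al - B - (al - 1) * (A * B))) by (field; repeat split; lra).
  assert (0 <= (l * b / (al * B)) * (al - B - (al - 1) * (A * B))).
  { apply Rmult_le_pos. left. apply Rdiv_lt_0_compat. apply Rmult_lt_0_compat; lra.
    apply Rmult_lt_0_compat; lra. nra. }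
  lra.
Qed.

Lemma term_gt al l n : 1 < al -> 0 < l ->
  dbb al l n <= l / al * bb al l n + l * (1 - / al) * bb al l (S n).
Proof.
  intros Hal Hl. unfold dbb. rewrite bb_S by auto.
  set (y := ln (l / INR (S n))).
  assert (HSn : 0 < INR (S n)) by (apply lt_0_INR; lia).
  assert (Ey : exp y = l / INR (S n)) by (apply exp_ln, Rdiv_lt_0_compat; auto).
  assert (ES : INR (S n) = l / exp y) by (rewrite Ey; field; split; lra).
  assert (Ee : exp y = exp (al * y) * exp ((1 - al) * y)) by (rewrite <- exp_plus; f_equal; ring).
  pose proof (L2 al y Hal). pose proof (bb_pos al l n) as Hb.
  pose proof (exp_pos (al * y)). pose proof (exp_pos ((1-al) * y)).
  rewrite ES, Ee.
  set (b := bb al l n). set (A := exp (al * y)). set (B := exp ((1-al)*y)).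
  fold B in H. rewrite Ee in H. fold A B in H.
  assert (0 < A) by apply exp_pos. assert (0 < B) by apply exp_pos. assert (0 < b) by apply bb_pos.
  assert (Hd : l / (A * B) * (b * A) - (l / al * b + l * (1 - / al) * (b * A))
     = (l * b / (al * B)) * (al - B - (al - 1) * (A * B))) by (field; repeat split; lra).
  assert (0 <= (l * b / (al * B)) * (B + (al - 1) * (A * B) - al)).
  { apply Rmult_le_pos. left. apply Rdiv_lt_0_compat. apply Rmult_lt_0_compat; lra.
    apply Rmult_lt_0_compat; lra. nra. }
  lra.
Qed.

Lemma ex_sub (a b : nat -> R) : ex_series a -> ex_series b -> ex_series (fun n => a n - b n).
Proof. intros Ha Hb. apply (ex_series_minus a b Ha Hb). Qed.

Lemma ex_scal (c : R) (a : nat -> R) : ex_series a -> ex_series (fun n => c * a n).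
Proof. intros Ha. apply (@ex_series_scal_l R_AbsRing R_NormedModule c a Ha). Qed.

Lemma ex_add (a b : nat -> R) : ex_series a -> ex_series b -> ex_series (fun n => a n + b n).
Proof. intros Ha Hb. apply (ex_series_plus a b Ha Hb). Qed.

Lemma Series_bb_split al l : 0 < al -> 0 < l ->
  Series (bb al l) = 1 + Series (fun n => bb al l (S n)).
Proof.
  intros Hal Hl. rewrite Series_incr_1 by (apply ex_bb; auto). rewrite bb_0. reflexivity.
Qed.

Lemma ex_bbS al l : 0 < al -> 0 < l -> ex_series (fun n => bb al l (S n)).
Proof. intros; apply (proj1 (ex_series_incr_1 (bb al l))), ex_bb; auto. Qed.

Lemma key_sum al l : 0 < al -> 0 < l ->
  Series (fun n => dbb al l n - (l / al * bb al l n + l * (1 - / al) * bb al l (S n)))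
  = Series (dbb al l) - (l * Series (bb al l) + l * (/ al - 1)).
Proof.
  intros Hal Hl.
  pose proof (ex_bb al l Hal Hl). pose proof (ex_bbS al l Hal Hl). pose proof (ex_dbb al l Hal Hl).
  rewrite Series_minus; auto.
  2:{ apply ex_add; apply ex_scal; auto. }
  rewrite Series_plus by (apply ex_scal; auto).
  rewrite !Series_scal_l. rewrite (Series_bb_split al l) by auto. field. lra.
Qed.

Lemma key_lt al l : 0 < al < 1 -> 0 < l -> l * Series (bb al l) < Series (dbb al l).
Proof.
  intros Hal Hl.
  assert (0 <= Series (fun n => dbb al l n - (l / al * bb al l n + l * (1 - / al) * bb al l (S n)))).
  { apply Series_nonneg.
    - intros n. pose proof (term_lt al l n Hal Hl). lra.
    - apply ex_sub. apply ex_dbb; lra. apply ex_add; apply ex_scal.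
      apply ex_bb; lra. apply ex_bbS; lra. }
  rewrite key_sum in H by lra.
  assert (1 < / al). { rewrite <- Rinv_1. apply Rinv_lt_contravar; lra. }
  assert (0 < l * (/ al - 1)) by (apply Rmult_lt_0_compat; lra).
  lra.
Qed.

Lemma key_gt al l : 1 < al -> 0 < l -> Series (dbb al l) < l * Series (bb al l).
Proof.
  intros Hal Hl.
  assert (0 <= Series (fun n => - (dbb al l n - (l / al * bb al l n + l * (1 - / al) * bb al l (S n))))).
  { apply Series_nonneg.
    - intros n. pose proof (term_gt al l n Hal Hl). lra.
    -
      refine (ex_series_ext _ _ _ (ex_scal (-1) _ (ex_sub _ _ (ex_dbb al l ltac:(lra) Hl)
        (ex_add _ _ (ex_scal (l/al) _ (ex_bb al l ltac:(lra) Hl))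
                    (ex_scal (l * (1 - / al)) _ (ex_bbS al l ltac:(lra) Hl)))))).
      intros; simpl; ring. }
  rewrite (Series_ext _ (fun n => -1 * (dbb al l n - (l / al * bb al l n + l * (1 - / al) * bb al l (S n))))) in H by (intros; ring).
  rewrite Series_scal_l, key_sum in H by lra.
  assert (/ al < 1). { rewrite <- Rinv_1. apply Rinv_lt_contravar; lra. }
  assert (0 < l * (1 - / al)) by (apply Rmult_lt_0_compat; lra).
  lra.
Qed.

Lemma psi_eq al t : 0 < t -> psi al t = exp (- al * t) * PSeries (cc al) (xx al t).
Proof.
  intros Ht. unfold psi, PSeries. f_equal. apply Series_ext. intros n.
  apply (bb_eq al t n Ht).
Qed.

Lemma psi_eq2 al t : psi al t = exp (- al * t) * Series (bb al t).
Proof. reflexivity. Qed.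

Definition Dpsi al l := al * exp (- al * l) / l * (Series (dbb al l) - l * Series (bb al l)).

Lemma psi_derive al l : 0 < al -> 0 < l -> is_derive (psi al) l (Dpsi al l).
Proof.
  intros Hal Hl.
  assert (Hr : Rbar_lt (Rabs (xx al l)) (CV_radius (cc al))) by (rewrite radius; auto; exact I).
  assert (Hf : is_derive (fun t => exp (- al * t)) l (- al * exp (- al * l))).
  { auto_derive; auto. ring. }
  assert (Hx : is_derive (xx al) l (xx al l * (al / l))).
  { unfold xx. auto_derive; auto. field. lra. }
  pose proof (is_derive_comp (PSeries (cc al)) (xx al) l _ _ (is_derive_PSeries _ _ Hr) Hx) as Hg.
  pose proof (is_derive_mult _ _ l _ _ Hf Hg ltac:(intros; apply Rmult_comm)) as Hm.
  apply is_derive_ext_loc with (f := fun t => exp (- al * t) * PSeries (cc al) (xx al t)).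
  { exists (mkposreal l Hl). intros t Ht.
    unfold ball in Ht; simpl in Ht; unfold AbsRing_ball, abs, minus, plus, opp in Ht; simpl in Ht.
    apply Rabs_lt_between' in Ht. symmetry; apply psi_eq. lra. }
  replace (Dpsi al l) with
    (plus (mult (- al * exp (- al * l)) (PSeries (cc al) (xx al l)))
          (mult (exp (- al * l)) (scal (xx al l * (al / l)) (PSeries (PS_derive (cc al)) (xx al l))))).
  exact Hm.
  unfold plus, mult, scal; simpl. unfold mult; simpl.
  unfold Dpsi.
  assert (E1 : PSeries (cc al) (xx al l) = Series (bb al l)).
  { unfold PSeries. apply Series_ext. intros n. symmetry; apply bb_eq; auto. }
  assert (E2 : xx al l * PSeries (PS_derive (cc al)) (xx al l) = Series (dbb al l)).
  { unfold PSeries. rewrite <- Series_scal_l. apply Series_ext. intros n. symmetry; apply dbb_eq; auto. }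
  rewrite E1, <- E2. field. lra.
Qed.

Lemma Series_bb_ge1 al l : 0 < al -> 0 < l -> 1 <= Series (bb al l).
Proof.
  intros Hal Hl. rewrite Series_bb_split by auto.
  assert (0 <= Series (fun n => bb al l (S n))).
  { apply Series_nonneg. intros; left; apply bb_pos. apply ex_bbS; auto. }
  lra.
Qed.

Lemma psi_pos al l : 0 < al -> 0 < l -> 0 < psi al l.
Proof.
  intros Hal Hl. rewrite psi_eq2. apply Rmult_lt_0_compat. apply exp_pos.
  pose proof (Series_bb_ge1 al l Hal Hl). lra.
Qed.

Lemma renyi_eq al l : 0 < l -> poisson_renyi al l = / (1 - al) * ln (psi al l).
Proof.
  intros Hl. unfold poisson_renyi, renyi_entropy. f_equal. f_equal.
  rewrite psi_eq2, Rmult_comm, <- Series_scal_r. apply Series_ext. intros n.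
  unfold poisson_p, bb, Rpower. rewrite <- exp_plus. f_equal.
  rewrite ln_mult, ln_exp. ring.
  apply Rdiv_lt_0_compat. apply pow_lt; auto. apply fact_pos. apply exp_pos.
Qed.

Lemma psi_incr al : 0 < al < 1 -> strictly_increasing_pos (fun lambda => psi al lambda).
Proof.
  intros Hal x y Hx Hxy.
  destruct (MVT_cor2 (psi al) (Dpsi al) x y Hxy) as [c [Hc Hc2]].
  { intros c Hc. apply is_derive_Reals, psi_derive; lra. }
  assert (0 < Dpsi al c).
  { unfold Dpsi. apply Rmult_lt_0_compat.
    apply Rdiv_lt_0_compat. apply Rmult_lt_0_compat. lra. apply exp_pos. lra.
    pose proof (key_lt al c Hal ltac:(lra)). lra. }
  assert (0 < Dpsi al c * (y - x)) by (apply Rmult_lt_0_compat; lra).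
  lra.
Qed.

Lemma psi_decr al : 1 < al -> strictly_decreasing_pos (fun lambda => psi al lambda).
Proof.
  intros Hal x y Hx Hxy.
  destruct (MVT_cor2 (psi al) (Dpsi al) x y Hxy) as [c [Hc Hc2]].
  { intros c Hc. apply is_derive_Reals, psi_derive; lra. }
  assert (Dpsi al c < 0).
  { unfold Dpsi. rewrite <- (Rmult_0_r (al * exp (- al * c) / c)). apply Rmult_lt_compat_l.
    apply Rdiv_lt_0_compat. apply Rmult_lt_0_compat. lra. apply exp_pos. lra.
    pose proof (key_gt al c Hal ltac:(lra)). lra. }
  assert (Dpsi al c * (y - x) < 0).
  { rewrite <- (Rmult_0_l (y - x)). apply Rmult_lt_compat_r; lra. }
  lra.
Qed.

Theorem theorem2 :
  (forall alpha : R, 0 < alpha < 1 ->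
     strictly_increasing_pos (fun lambda => psi alpha lambda)) /\
  (forall alpha : R, 1 < alpha ->
     strictly_decreasing_pos (fun lambda => psi alpha lambda)) /\
  (forall alpha : R, 0 < alpha -> alpha <> 1 ->
     strictly_increasing_pos (fun lambda => poisson_renyi alpha lambda)).
Proof.
  split; [exact psi_incr|]. split; [exact psi_decr|].
  intros al Hal Hne x y Hx Hxy.
  rewrite !renyi_eq by lra.
  pose proof (psi_pos al x Hal Hx). pose proof (psi_pos al y Hal ltac:(lra)).
  destruct (Rlt_or_le al 1) as [H1|H1].
  - pose proof (psi_incr al ltac:(lra) x y Hx Hxy). simpl in H2.
    pose proof (ln_increasing _ _ H H2).
    assert (0 < / (1 - al)) by (apply Rinv_0_lt_compat; lra).
    apply Rmult_lt_compat_l; auto.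
  - assert (H1' : 1 < al) by lra.
    pose proof (psi_decr al H1' x y Hx Hxy). simpl in H2.
    pose proof (ln_increasing _ _ H0 H2).
    assert (/ (1 - al) < 0) by (apply Rinv_lt_0_compat; lra).
    nra.
Qed.
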